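(* Let $m\ge1$ be an integer, $\Gamma_1,\Gamma_2$ co-prime integers with $1<\Gamma_1<\Gamma_2$, $m_1=m\Gamma_1$, $m_2=m\Gamma_2$, let $1\le j\le K+1$, and let $\tau$ be a real number with $\tau<m\sigma_j/4$. For every integer $N$ with $0\le N<\min\big(m_2(1+\ddot n_{2,j}),\,m_1(1+\ddot n_{1,j})\big)$ and every pair of erroneous remainders $\tilde r_1,\tilde r_2$ of $N$ with $|\Delta r_i|\le\tau$ for $i=1,2$, Algorithm 2 (with index $j$) returns $\hat n_1=n_1$ and $\hat n_2=n_2$.
   Context: $|a|_b$ is the remainder of the integer $a$ modulo the positive integer $b$; $[x]=\lfloor x+1/2\rfloor$. For an integer $N\ge0$: folding integers $n_i=\lfloor N/m_i\rfloor$, remainders $r_i=N-n_im_i$; erroneous remainders are integers $\tilde r_i$ with $0\le\tilde r_i<m_i$, errors $\Delta r_i=\tilde r_i-r_i$. Euclidean sequence: $\sigma_{-1}=\Gamma_2$, $\sigma_0=\Gamma_1$, $\sigma_i=|\sigma_{i-2}|_{\sigma_{i-1}}$ for $i\ge1$; $K\ge0$ is the index with $\sigma_K>1$, $\sigma_{K+1}=1$. For $1\le n<\Gamma_1$, $S_{2,n}=\{|t\Gamma_2|_{\Gamma_1}:0\le t\le n\}$, $d_{2,n}$ = minimum distance between distinct elements of $S_{2,n}$; for $1\le n<\Gamma_2$, $S_{1,n}=\{|t\Gamma_1|_{\Gamma_2}:0\le t\le n\}$, $d_{1,n}$ likewise. $\ddot n_{2,j}=\max\{n:1\le n<\Gamma_1,\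 d_{2,n}\ge\sigma_j\}$, $\ddot n_{1,j}=\max\{n:1\le n<\Gamma_2,\ d_{1,n}\ge\sigma_j\}$. $\bar\Gamma_{21}$ is the inverse of $\Gamma_2$ modulo $\Gamma_1$, $\bar\Gamma_{12}$ the inverse of $\Gamma_1$ modulo $\Gamma_2$. Algorithm 2 (index $j$, input $\tilde r_1,\tilde r_2$): compute $\mathbf q_{21}=(\tilde r_1-\tilde r_2)/m$. (i) If $\mathbf q_{21}\ge\sigma_j/2$: if some $x\in S_{2,\ddot n_{2,j}}$ satisfies $-\sigma_j/2\le\mathbf q_{21}-x<\sigma_j/2$, let $s_2=x$; otherwise let $s_2$ be an element of $S_{2,\ddot n_{2,j}}$ at minimum distance from $\mathbf q_{21}$. Let $\hat n_2\in[0,\Gamma_1)$ with $\hat n_2\equiv s_2\bar\Gamma_{21}\pmod{\Gamma_1}$ and $\hat n_1=[(\hat n_2m_2+\tilde r_2-\tilde r_1)/m_1]$. (ii) If $\mathbf q_{21}<-\sigma_j/2$: if some $y\in S_{1,\ddot n_{1,j}}$ satisfies $-\sigma_j/2\le\mathbf q_{21}+y<\sigma_j/2$, let $s_1=y$; otherwise let $s_1$ be an element of $S_{1,\ddot n_{1,j}}$ at minimum distance from $-\mathbf q_{21}$. Let $\hat n_1\in[0,\Gamma_2)$ with $\hat n_1\equiv s_1\bar\Gamma_{12}\pmod{\Gamma_2}$ and $\hat n_2=[(\hat n_1m_1+\tilde r_1-\tilde r_2)/m_2]$. (iii) If $-\sigma_j/2\le\mathbf q_{21}<\sigma_j/2$: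 $\hat n_1=\hat n_2=0$. *)

(* Defs.v *)
From HB Require Import structures.
From mathcomp Require Import all_boot all_order all_algebra.
Set Implicit Arguments. Unset Strict Implicit. Unset Printing Implicit Defensive.
Import Order.TTheory GRing.Theory Num.Theory.

(* Euclidean sequence: esq G1 G2 i = (sigma_{i-1}, sigma_i), with
   sigma_{-1} = G2, sigma_0 = G1, sigma_i = sigma_{i-2} mod sigma_{i-1}. *)
Fixpoint esq (G1 G2 : nat) (i : nat) : nat * nat :=
  match i with
  | 0 => (G2, G1)
  | i'.+1 => let p := esq G1 G2 i' in (p.2, p.1 %% p.2)
  end.

Definition sigma (G1 G2 i : nat) : nat := (esq G1 G2 i).2.

Definition Sset (a b n : nat) : seq nat := [seq (t * a) %% b | t <- iota 0 n.+1].

Definition distn (x y : nat) : nat := (x - y) + (y - x).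

(* minimum distance between distinct elements of s (0 if there are none). *)
Definition mindist (s : seq nat) : nat :=
  let ds := [seq distn x y | x <- s, y <- [seq z <- s | z != x]] in
  foldr minn (head 0 ds) ds.

Definition d2 (G1 G2 n : nat) : nat := mindist (Sset G2 G1 n).
Definition d1 (G1 G2 n : nat) : nat := mindist (Sset G1 G2 n).

Definition nddot2 (G1 G2 j : nat) : nat :=
  \max_(1 <= n < G1 | sigma G1 G2 j <= d2 G1 G2 n) n.
Definition nddot1 (G1 G2 j : nat) : nat :=
  \max_(1 <= n < G2 | sigma G1 G2 j <= d1 G1 G2 n) n.

Definition invmod (a b : nat) : nat := \max_(i < b | (a * i) %% b == 1 %% b) i.

Local Open Scope ring_scope.

Definition rnd {R : archiRealFieldType} (x : R) : int := Num.floor (x + 2^-1).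

(* Algorithm 2 with index j, as a relation between the inputs (erroneous
   remainders rt1 rt2) and its possible outputs (nh1, nh2).  The relation
   captures the (possibly non-deterministic, in case of ties) choices. *)
Definition alg2 (R : archiRealFieldType) (m G1 G2 j : nat) (rt1 rt2 : nat)
    (nh1 nh2 : int) : Prop :=
  let m1 := (m * G1)%N in
  let m2 := (m * G2)%N in
  let sj : R := (sigma G1 G2 j)%:R in
  let q : R := ((rt1%:Z - rt2%:Z)%:~R) / m%:R in
  let S2 := Sset G2 G1 (nddot2 G1 G2 j) in
  let S1 := Sset G1 G2 (nddot1 G1 G2 j) in
  let win (z : R) := - (sj / 2) <= z /\ z < sj / 2 in
  (sj / 2 <= q /\
   exists2 s2, s2 \in S2 &
     (win (q - s2%:R) \/
      ((~ exists2 x, x \in S2 & win (q - x%:R)) /\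
       forall y, y \in S2 -> `|q - s2%:R| <= `|q - y%:R|)) /\
     nh2 = ((s2 * invmod G2 G1) %% G1)%N%:Z /\
     nh1 = rnd ((nh2 * m2%:Z + rt2%:Z - rt1%:Z)%:~R / (m1%:R : R)))
  \/
  (q < - (sj / 2) /\
   exists2 s1, s1 \in S1 &
     (win (q + s1%:R) \/
      ((~ exists2 y, y \in S1 & win (q + y%:R)) /\
       forall y, y \in S1 -> `|- q - s1%:R| <= `|- q - y%:R|)) /\
     nh1 = ((s1 * invmod G1 G2) %% G2)%N%:Z /\
     nh2 = rnd ((nh1 * m1%:Z + rt1%:Z - rt2%:Z)%:~R / (m2%:R : R)))
  \/
  (win q /\ nh1 = 0 /\ nh2 = 0).

(* Main.v *)
Require Import Defs.
From HB Require Import structures.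
From mathcomp Require Import all_boot all_order all_algebra.
From mathcomp Require Import zify ring lra.
Import Order.TTheory GRing.Theory Num.Theory.

Lemma bigmax_cases (I : eqType) (r : seq I) (P : pred I) (F : I -> nat) :
  (\max_(i <- r | P i) F i = 0)%N \/
  exists2 i, (i \in r) && P i & \max_(i <- r | P i) F i = F i.
Proof.
elim: r => [|h t IH]; first by left; rewrite big_nil.
rewrite big_cons; case: ifP => Ph.
  case: IH => [->|[i /andP[it Pi] ->]].
    by right; exists h; rewrite ?inE ?eqxx ?Ph // maxn0.
  case: (leqP (F i) (F h)) => hi.
    by right; exists h; rewrite ?inE ?eqxx ?Ph //; apply/maxn_idPl.
  right; exists i; rewrite ?inE ?it ?Pi ?orbT //; apply/maxn_idPr; exact: ltnW.
case: IH => [->|[i /andP[it Pi] ->]]; first by left.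
by right; exists i; rewrite ?inE ?it ?Pi ?orbT.
Qed.

Lemma foldr_minn_le (z a : nat) (l : seq nat) : a \in l -> (foldr minn z l <= a)%N.
Proof.
elim: l => //= h t IH; rewrite inE => /predU1P[->|hat]; first exact: geq_minl.
by rewrite geq_min IH ?orbT.
Qed.

Lemma mindist_le (s : seq nat) x y : x \in s -> y \in s -> x != y ->
  (mindist s <= distn x y)%N.
Proof.
move=> xs ys xy; rewrite /mindist; apply: foldr_minn_le.
apply/allpairsPdep; exists x, y; split => //.
by rewrite mem_filter eq_sym xy.
Qed.

Lemma inv_exists (a b : nat) : (1 < b)%N -> coprime a b ->
  exists u, (u < b)%N /\ (a * u) %% b = 1%N.
Proof.
move=> hb cop.
have [c _ hc] := Bezoutr a (ltnW hb).
rewrite (eqnP cop) in hc.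
case/dvdnP: hc => t ht.
have t1 : (1 <= t)%N by case: t ht => //=; rewrite mul0n.
exists (((b - 1) * c) %% b); split; first by rewrite ltn_mod; lia.
rewrite modnMmr mulnA (mulnC a) -mulnA.
have -> : ((b - 1) * (a * c) = ((b - 1) * t - 1) * b + 1)%N.
  have : (a * c = t * b - 1)%N by lia.
  move=> ->. nia.
by rewrite modnMDl modn_small.
Qed.

Lemma invmodP (a b : nat) : (1 < b)%N -> coprime a b ->
  (a * invmod a b) %% b = 1%N.
Proof.
move=> hb cop; have [u [ub hu]] := inv_exists _ _ hb cop.
rewrite /invmod.
have ho : (Ordinal ub \in index_enum 'I_b) && ((a * Ordinal ub) %% b == 1 %% b).
  by rewrite mem_index_enum /= hu modn_small.
case: (@bigmax_cases _ (index_enum 'I_b) (fun i : 'I_b => (a * i) %% b == 1 %% b) (fun i : 'I_b => nat_of_ord i)) => [h|[i /andP[_ /eqP hi] ->]].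
  have := @leq_bigmax_seq _ (index_enum 'I_b) (fun i : 'I_b => (a*i)%%b == 1%%b) (fun i : 'I_b => nat_of_ord i) (Ordinal ub) (mem_index_enum _) (proj2 (andP ho)).
  rewrite h /= leqn0 => /eqP u0; move: hu; rewrite u0 muln0 mod0n //.
by rewrite hi modn_small.
Qed.

Lemma sigma_le (G1 G2 i : nat) : (0 < G1)%N -> (0 < i)%N ->
  ((esq G1 G2 i).1 <= G1 /\ (esq G1 G2 i).2 <= G1)%N.
Proof.
move=> h1; elim: i => // [[|i] IH] _ /=.
  by rewrite leqnn ltnW // ltn_mod.
have [a b] := IH isT; split => //; exact: leq_trans (leq_mod _ _) a.
Qed.


Lemma side (A B x y nd m rA rB s : nat) :
  (0 < m)%N -> (1 < B)%N -> coprime A B ->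
  (m * (x * A) + rA = m * (y * B) + rB)%N -> (rB < m * B)%N ->
  (y * B < x * A)%N -> (x <= nd)%N ->
  nd = (\max_(1 <= n < B | s <= mindist (Sset A B n)) n)%N ->
  exists kk, [/\ x * A = y * B + kk, kk \in Sset A B nd, s <= kk,
     (kk * invmod A B) %% B = x & x < B]%N /\ (s <= mindist (Sset A B nd))%N.
Proof.
move=> m0 B1 cop eq rBlt lt xnd ndE.
set kk := (x * A - y * B)%N.
have e : (x * A = y * B + kk)%N by rewrite /kk subnKC // ltnW.
have kkB : (kk < B)%N.
  move: eq; rewrite e mulnDr -addnA => /addnI eq2.
  have : (m * kk < m * B)%N by rewrite (leq_ltn_trans _ rBlt) // -eq2 leq_addr.
  by rewrite ltn_pmul2l.
have hmod : ((x * A) %% B = kk)%N by rewrite e modnMDl modn_small.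
have x1 : (0 < x)%N by case: x {xnd eq e hmod kkB kk} lt => //; rewrite mul0n.
have nd1 : (0 < nd)%N by exact: leq_trans xnd.
have [hs ndB] : (s <= mindist (Sset A B nd) /\ nd < B)%N.
  case: (@bigmax_cases _ (index_iota 1 B) (fun n => s <= mindist (Sset A B n))%N (fun n => n)) => [h|[i /andP[ii hi] h]].
    by move: nd1; rewrite ndE h.
  rewrite ndE h; split => //; move: ii; rewrite mem_index_iota; lia.
have kkS : kk \in Sset A B nd.
  by rewrite -hmod; apply: (map_f (fun t => (t * A) %% B)); rewrite mem_iota; lia.
have zS : 0%N \in Sset A B nd.
  by rewrite -(mod0n B) -(mul0n A); apply: (map_f (fun t => (t * A) %% B)); rewrite mem_iota.
have kk0 : kk != 0%N by rewrite /kk; apply/eqP; lia.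
exists kk; split => //; split => //.
- apply: leq_trans hs _; apply: (leq_trans (mindist_le _ _ _ zS kkS _)); first by rewrite eq_sym.
  by rewrite /distn; lia.
- by rewrite -hmod modnMml -mulnA -modnMmr invmodP // muln1 modn_small //; lia.
- lia.
Qed.

Lemma zero_case (G1 G2 n1 n2 : nat) : (0 < G1)%N -> coprime G1 G2 -> (n2 < G1)%N ->
  (n2 * G2 = n1 * G1)%N -> n1 = 0%N /\ n2 = 0%N.
Proof.
move=> g1 cop n2l e.
have : (G1 %| n2 * G2)%N by rewrite e dvdn_mull.
rewrite Gauss_dvdl // => /dvdn_leq h.
have n20 : n2 = 0%N by case: n2 {e} n2l h => // n2 l /(_ isT); lia.
by move: e; rewrite n20 mul0n => /esym/eqP; rewrite muln_eq0 (negbTE (lt0n_neq0 g1)) orbF => /eqP.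
Qed.

Lemma nddot_lt (B : nat) (P : pred nat) : (0 < B)%N -> (\max_(1 <= n < B | P n) n < B)%N.
Proof.
move=> b0; case: (@bigmax_cases _ (index_iota 1 B) P (fun n => n)) => [->//|[i /andP[ii _] ->]].
by move: ii; rewrite mem_index_iota => /andP[].
Qed.

Lemma distn_split (s x y : nat) : (s <= distn x y)%N -> (s + x <= y)%N \/ (s + y <= x)%N.
Proof. rewrite /distn; lia. Qed.

Local Open Scope ring_scope.

Lemma rnd_ok (R : archiRealFieldType) (n : int) (y b : R) : 0 < b ->
  - b <= 2 * (y - n%:~R * b) -> 2 * (y - n%:~R * b) < b -> rnd (y / b) = n.
Proof.
move=> b0 h1 h2; rewrite /rnd; apply: floor_def.
have hy : y = (y / b) * b by field; rewrite gt_eqF.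
rewrite hy in h1 h2; set t := y / b in h1 h2 *; rewrite intrD mulr1z.
have h3 : -1 <= 2 * (t - n%:~R) by nra.
have h4 : 2 * (t - n%:~R) < 1 by nra.
apply/andP; split; lra.
Qed.

Lemma qeq (R : archiRealFieldType) (a b mm : nat) (k D1 D2 : int) : (0 < mm)%N ->
  a%:Z - b%:Z = mm%:Z * k + D1 - D2 ->
  ((a%:Z - b%:Z)%:~R / mm%:R : R) = k%:~R + (D1%:~R - D2%:~R) / mm%:R.
Proof.
move=> h ->; rewrite !(intrD, intrB, intrM) /=.
have hm : (mm%:R : R) != 0 by rewrite pnatr_eq0 -lt0n.
by rewrite [(mm%:Z)%:~R]/(intmul _ _) /=; field.
Qed.

Lemma small (R : realFieldType) (d mm c : R) : 0 < mm -> - (mm * c) < d -> d < mm * c -> - c < d / mm < c.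
Proof.
move=> m0 h1 h2; rewrite ltr_pdivrMr // ltr_pdivlMr //; apply/andP; split; nra.
Qed.

Local Open Scope ring_scope.

Lemma lin1 (A B a b c d : int) : A + a = B + b -> A + c - d = B + (c - a) - (d - b).
Proof. move=> h; have -> : A = B + b - a by rewrite -h addrK. ring. Qed.

Lemma lin2 (A B a b c d : int) : A + a = B + b -> c - d = A - B + (c - b) - (d - a).
Proof. move=> h; have -> : A = B + b - a by rewrite -h addrK. ring. Qed.

Theorem corollary1 (R : archiRealFieldType) (m G1 G2 K j : nat) (tau : R)
  (Hm : (1 <= m)%N) (Hcop : coprime G1 G2) (H1 : (1 < G1)%N) (H12 : (G1 < G2)%N)
  (HK1 : (1 < sigma G1 G2 K)%N) (HK2 : sigma G1 G2 K.+1 = 1%N)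
  (Hj : (1 <= j <= K.+1)%N)
  (Htau : tau < (m * sigma G1 G2 j)%N%:R / 4)
  (N : nat)
  (HN : (N < minn ((m * G2) * (1 + nddot2 G1 G2 j)) ((m * G1) * (1 + nddot1 G1 G2 j)))%N)
  (rt1 rt2 : nat) (Hr1 : (rt1 < m * G1)%N) (Hr2 : (rt2 < m * G2)%N)
  (Hd1 : (`|rt1%:Z - (N %% (m * G1))%N%:Z|%:~R : R) <= tau)
  (Hd2 : (`|rt2%:Z - (N %% (m * G2))%N%:Z|%:~R : R) <= tau) :
  (exists nh1 nh2, alg2 R m G1 G2 j rt1 rt2 nh1 nh2) /\
  (forall nh1 nh2, alg2 R m G1 G2 j rt1 rt2 nh1 nh2 ->
     nh1 = (N %/ (m * G1))%N%:Z /\ nh2 = (N %/ (m * G2))%N%:Z).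
Proof.
have m0 : (0 < m)%N by [].
have g10 : (0 < G1)%N by lia.
have g20 : (0 < G2)%N by lia.
have M10 : (0 < m * G1)%N by rewrite muln_gt0 m0.
have M20 : (0 < m * G2)%N by rewrite muln_gt0 m0.
have eN1 := divn_eq N (m * G1).
have eN2 := divn_eq N (m * G2).
have r1l := ltn_pmod N M10.
have r2l := ltn_pmod N M20.
set n1 := (N %/ (m * G1))%N in eN1 *.
set n2 := (N %/ (m * G2))%N in eN2 *.
set r1 := (N %% (m * G1))%N in eN1 r1l Hd1 *.
set r2 := (N %% (m * G2))%N in eN2 r2l Hd2 *.
have n2le : (n2 <= nddot2 G1 G2 j)%N.
  have : (N < m * G2 * (1 + nddot2 G1 G2 j))%N by move: HN; rewrite leq_min => /andP[].
  by rewrite /n2 mulnC -ltn_divLR // add1n ltnS.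
have n1le : (n1 <= nddot1 G1 G2 j)%N.
  have : (N < m * G1 * (1 + nddot1 G1 G2 j))%N by move: HN; rewrite leq_min => /andP[].
  by rewrite /n1 mulnC -ltn_divLR // add1n ltnS.
have eqX : (m * (n2 * G2) + r2 = m * (n1 * G1) + r1)%N.
  by rewrite mulnA (mulnC m) mulnA (mulnC m n1) -mulnA -mulnA -eN1 -eN2.
set s := sigma G1 G2 j.
have j0 : (0 < j)%N by case/andP: Hj.
have sG1 : (s <= G1)%N by have [] := sigma_le G1 G2 j g10 j0.
set d1 : R := (rt1%:Z - r1%:Z)%:~R.
set d2 : R := (rt2%:Z - r2%:Z)%:~R.
have hd1 : - tau <= d1 <= tau by rewrite -ler_norml /d1 -intr_norm.
have hd2 : - tau <= d2 <= tau by rewrite -ler_norml /d2 -intr_norm.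
case/andP: hd1 => hd1a hd1b; case/andP: hd2 => hd2a hd2b.
have mR : (0 : R) < m%:R by rewrite ltr0n.
have HtauR : tau * 4 < m%:R * s%:R by move: Htau; rewrite natrM ltr_pdivlMr.
have msG : m%:R * s%:R <= ((m * G1)%N%:R : R).
  by rewrite -natrM ler_nat leq_mul2l sG1 orbT.
have msG2 : m%:R * s%:R <= ((m * G2)%N%:R : R).
  by rewrite -natrM ler_nat leq_mul2l (leq_trans sG1 (ltnW H12)) orbT.
have Ez : n2%:Z * (m*G2)%N%:Z + r2%:Z = n1%:Z * (m*G1)%N%:Z + r1%:Z.
  by rewrite -!PoszM -!PoszD -eN1 -eN2.
have EzX : m%:Z * (n2 * G2)%N%:Z + r2%:Z = m%:Z * (n1 * G1)%N%:Z + r1%:Z.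
  by rewrite -!PoszM -!PoszD eqX.
have R1 : rnd (((n2%:Z * (m * G2)%N%:Z + rt2%:Z - rt1%:Z)%:~R) / ((m * G1)%N%:R : R)) = n1%:Z.
  have hi : n2%:Z * (m * G2)%N%:Z + rt2%:Z - rt1%:Z = n1%:Z * (m * G1)%N%:Z + (rt2%:Z - r2%:Z) - (rt1%:Z - r1%:Z).
    by apply: lin1.
  have hy : ((n1%:Z * (m*G1)%N%:Z + (rt2%:Z - r2%:Z) - (rt1%:Z - r1%:Z))%:~R : R) = n1%:~R * (m*G1)%N%:R + d2 - d1.
    rewrite /d1 /d2 !(intrD, intrB, intrM, intrN) -!pmulrn; lra.
  by rewrite hi hy; apply: rnd_ok; [rewrite ltr0n | lra | lra].
have R2 : rnd (((n1%:Z * (m * G1)%N%:Z + rt1%:Z - rt2%:Z)%:~R) / ((m * G2)%N%:R : R)) = n2%:Z.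
  have hi : n1%:Z * (m * G1)%N%:Z + rt1%:Z - rt2%:Z = n2%:Z * (m * G2)%N%:Z + (rt1%:Z - r1%:Z) - (rt2%:Z - r2%:Z).
    by apply: lin1; rewrite Ez.
  have hy : ((n2%:Z * (m*G2)%N%:Z + (rt1%:Z - r1%:Z) - (rt2%:Z - r2%:Z))%:~R : R) = n2%:~R * (m*G2)%N%:R + d1 - d2.
    rewrite /d1 /d2 !(intrD, intrB, intrM, intrN) -!pmulrn; lra.
  by rewrite hi hy; apply: rnd_ok; [rewrite ltr0n | lra | lra].
have hq : ((rt1%:Z - rt2%:Z)%:~R / m%:R : R) = ((n2 * G2)%N%:Z - (n1 * G1)%N%:Z)%:~R + (d1 - d2) / m%:R.
  apply: qeq => //; rewrite mulrBr.
  by apply: lin2.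
have he : - (s%:R / 2) < (d1 - d2) / m%:R < s%:R / 2 by apply: small => //; lra.
rewrite /alg2; cbv zeta; rewrite hq.
set S1 := Sset G1 G2 (nddot1 G1 G2 j).
set S2 := Sset G2 G1 (nddot2 G1 G2 j).
set e := (d1 - d2) / m%:R in he *.
case/andP: he => hea heb.
rewrite -/s.
have s0 : (0 : R) <= s%:R by rewrite ler0n.
have cop21 : coprime G2 G1 by rewrite coprime_sym.
have [XY|XY|XY] := ltngtP (n1 * G1) (n2 * G2).
-
  have [kk [[eX kkS skk inv n2lt] hmin]] :=
    side G2 G1 n2 n1 (nddot2 G1 G2 j) m r2 r1 s
      m0 H1 cop21 eqX r1l XY n2le erefl.
  have kE : (n2 * G2)%N%:Z - (n1 * G1)%N%:Z = kk%:Z by rewrite eX PoszD addrAC subrr add0r.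
  rewrite kE -pmulrn.
  have skkR : (s%:R : R) <= kk%:R by rewrite ler_nat.
  split.
    exists n1%:Z, n2%:Z; left; split; first lra.
    exists kk => //; split; first by left; split; lra.
    by rewrite inv R1.
  move=> nh1 nh2 [[hq1 [s2 s2S [[[w1 w2] | [nw _]] [-> ->]]]] | [[hq2 _] | [[w1 w2] _]]].
  + case: (eqVneq s2 kk) => [->|ne]; first by rewrite inv R1.
    have := leq_trans hmin (mindist_le _ _ _ s2S kkS ne).
    case/distn_split; rewrite -(ler_nat R) natrD => h; move: w1 w2 h; set z := (s2%:R : R); move=> w1 w2 h; (suff : (0:R) < 0 by rewrite ltxx); lra.
  + by exfalso; apply: nw; exists kk => //; split; lra.
  + (suff : (0:R) < 0 by rewrite ltxx); lra.
  + (suff : (0:R) < 0 by rewrite ltxx); lra.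
-
  have [kk [[eX kkS skk inv n1lt] hmin]] :=
    side G1 G2 n1 n2 (nddot1 G1 G2 j) m r1 r2 s
      m0 (ltn_trans H1 H12) Hcop (esym eqX) r2l XY n1le erefl.
  have kE : (n2 * G2)%N%:Z - (n1 * G1)%N%:Z = - kk%:Z by rewrite eX PoszD opprD addrA subrr add0r.
  rewrite kE intrN -pmulrn.
  have skkR : (s%:R : R) <= kk%:R by rewrite ler_nat.
  split.
    exists n1%:Z, n2%:Z; right; left; split; first lra.
    exists kk => //; split; first by left; split; lra.
    by rewrite inv R2.
  move=> nh1 nh2 [[hq1 _] | [[hq2 [s1 s1S [[[w1 w2] | [nw _]] [-> ->]]]] | [[w1 w2] _]]].
  + (suff : (0:R) < 0 by rewrite ltxx); lra.
  + case: (eqVneq s1 kk) => [->|ne]; first by rewrite inv R2.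
    have := leq_trans hmin (mindist_le _ _ _ s1S kkS ne).
    case/distn_split; rewrite -(ler_nat R) natrD => h; move: w1 w2 h; set z := (s1%:R : R); move=> w1 w2 h; (suff : (0:R) < 0 by rewrite ltxx); lra.
  + by exfalso; apply: nw; exists kk => //; split; lra.
  + (suff : (0:R) < 0 by rewrite ltxx); lra.
-
  have n2lt : (n2 < G1)%N by apply: leq_ltn_trans n2le _; apply: nddot_lt.
  have [n10 n20] := zero_case G1 G2 n1 n2 g10 Hcop n2lt (esym XY).
  rewrite -XY subrr mulr0z add0r n10 n20.
  split.
    by exists 0, 0; right; right; split => //; split; lra.
  move=> nh1 nh2 [[hq1 _] | [[hq2 _] | [_ [-> ->]]]] //.
  + (suff : (0:R) < 0 by rewrite ltxx); lra.
  + (suff : (0:R) < 0 by rewrite ltxx); lra.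
Qed.
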